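(* Let $A$ be a partial monoid and $R$ an equivalence relation on $A$ in the category of partial monoids. Then $R$ is effective if and only if $R$ is additive and the canonical map $\alpha\colon A/\!\!/R\to A/R$ is injective.
   Context: A partial magma is a set $A$ with a distinguished element $0$, a subset $A_2\subseteq A\times A$ of summable pairs and a map $+\colon A_2\to A$, such that $(0,a),(a,0)\in A_2$ and $a+0=0+a=a$ for all $a$, and $(a,b)\in A_2$ implies $(b,a)\in A_2$ and $a+b=b+a$. It is a partial monoid if moreover, for all $a,b,c$: $(a,b),(a+b,c)\in A_2$ iff $(b,c),(a,b+c)\in A_2$, and then $(a+b)+c=a+(b+c)$. Homomorphisms are maps $f$ with $f(0)=0$, $(f(a_1),f(a_2))\in B_2$ and $f(a_1+a_2)=f(a_1)+f(a_2)$ for $(a_1,a_2)\in A_2$. $A\times A$ has summable pairs those summable componentwise. An equivalence relation on the partial monoid $A$ is a partial submonoid $R\subseteq A\times A$ such that for every partial monoid $X$, $\mathrm{Hom}(X,R)$ is an equivalence relation on $\mathrm{Hom}(X,A)$. $R$ is effective if there is a partial monoid homomorphism $f\colon A\to B$ whose kernel pair is $R\rightrightarrows A$, i.e. $R=\{(a,a'):f(a)=f(a')\}$ with $R_2$ all pairs of elements of $R$ summable in $A\times A$. $R$ is additive if $R_2=(R\times R)\cap(A\times A)_2$. For additive $R$, $A/\!\!/R$ is the quotient set $A/R$ with summable pairs $\{([a_1],[a_2]):(a_1,a_2)\in A_2\}$ and $[a_1]+[a_2]=[a_1+a_2]$ (a partial magma). $\pi\colon A\to A/R$ denotes the coequalizer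 of the two projections $R\rightrightarrows A$ in the category of partial monoids (which exists), and $\alpha\colon A/\!\!/R\to A/R$ is the unique partial magma homomorphism with $\alpha([a])=\pi(a)$. *)

(* Defs.v *)
From Stdlib Require Import Relations.

(** A partial monoid: carrier, distinguished 0, and a partial sum.
    [padd a b = Some c] means (a,b) is summable with a+b = c;
    [padd a b = None] means (a,b) is not summable. *)
Record PMonoid := {
  car :> Type;
  pzero : car;
  padd : car -> car -> option car;
  padd_0l : forall a, padd pzero a = Some a;
  padd_0r : forall a, padd a pzero = Some a;
  padd_comm : forall a b, padd a b = padd b a;
  padd_assoc_def : forall a b c,
    (exists ab, padd a b = Some ab /\ padd ab c <> None) <->
    (exists bc, padd b c = Some bc /\ padd a bc <> None);
  padd_assoc : forall a b c ab bc r,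
    padd a b = Some ab -> padd b c = Some bc -> padd ab c = Some r ->
    padd a bc = Some r
}.

Arguments pzero {_}.
Arguments padd {_} _ _.

Definition is_hom (M N : PMonoid) (f : M -> N) : Prop :=
  f pzero = pzero /\
  forall a b c, padd a b = Some c -> padd (f a) (f b) = Some (f c).

Definition padd2 (A : PMonoid) (p q : A * A) : option (A * A) :=
  match padd (fst p) (fst q), padd (snd p) (snd q) with
  | Some x, Some y => Some (x, y)
  | _, _ => None
  end.

(** A partial submonoid of A x A: a subset [inR] of A x A together with a set
    [R2] of summable pairs of elements of R, such that R with the induced sum
    is a partial monoid and the inclusion R -> A x A is a homomorphism. *)
Definition is_partial_submonoid2 (A : PMonoid)
    (inR : A * A -> Prop) (R2 : A * A -> A * A -> Prop) : Prop :=
  inR (pzero, pzero) /\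
  (forall p q, R2 p q ->
     inR p /\ inR q /\ exists s, padd2 A p q = Some s /\ inR s) /\
  (forall p, inR p -> R2 p (pzero, pzero) /\ R2 (pzero, pzero) p) /\
  (forall p q, R2 p q -> R2 q p) /\
  (forall p q r, inR p -> inR q -> inR r ->
     ((exists s, R2 p q /\ padd2 A p q = Some s /\ R2 s r) <->
      (exists t, R2 q r /\ padd2 A q r = Some t /\ R2 p t))).

(** The relation on Hom(X,A) given by Hom(X,R): the pair (g,h) of homs
    X -> A is the image of a hom X -> R, i.e. x |-> (g x, h x) is a
    homomorphism X -> R. *)
Definition hom_rel (A : PMonoid) (inR : A * A -> Prop)
    (R2 : A * A -> A * A -> Prop) (X : PMonoid) (g h : X -> A) : Prop :=
  is_hom X A g /\ is_hom X A h /\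
  (forall x, inR (g x, h x)) /\
  (forall x1 x2 x3, padd x1 x2 = Some x3 ->
     R2 (g x1, h x1) (g x2, h x2)).

Definition is_pm_equivalence (A : PMonoid)
    (inR : A * A -> Prop) (R2 : A * A -> A * A -> Prop) : Prop :=
  is_partial_submonoid2 A inR R2 /\
  forall X : PMonoid,
    (forall g : X -> A, is_hom X A g -> hom_rel A inR R2 X g g) /\
    (forall g h : X -> A, hom_rel A inR R2 X g h -> hom_rel A inR R2 X h g) /\
    (forall g h k : X -> A, hom_rel A inR R2 X g h -> hom_rel A inR R2 X h k ->
        hom_rel A inR R2 X g k).

(** R is effective: it is the kernel pair of some homomorphism f : A -> B. *)
Definition is_effective (A : PMonoid)
    (inR : A * A -> Prop) (R2 : A * A -> A * A -> Prop) : Prop :=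
  exists (B : PMonoid) (f : A -> B),
    is_hom A B f /\
    (forall a a', inR (a, a') <-> f a = f a') /\
    (forall p q, inR p -> inR q -> (R2 p q <-> padd2 A p q <> None)).

Definition is_additive (A : PMonoid)
    (inR : A * A -> Prop) (R2 : A * A -> A * A -> Prop) : Prop :=
  forall p q, R2 p q <-> (inR p /\ inR q /\ padd2 A p q <> None).

Definition is_coequalizer (A : PMonoid) (inR : A * A -> Prop)
    (B : PMonoid) (pi : A -> B) : Prop :=
  is_hom A B pi /\
  (forall a a', inR (a, a') -> pi a = pi a') /\
  forall (C : PMonoid) (g : A -> C), is_hom A C g ->
    (forall a a', inR (a, a') -> g a = g a') ->
    (exists u : B -> C, is_hom B C u /\ forall a, u (pi a) = g a) /\
    (forall u1 u2 : B -> C, is_hom B C u1 -> is_hom B C u2 ->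
       (forall a, u1 (pi a) = g a) -> (forall a, u2 (pi a) = g a) ->
       forall b, u1 b = u2 b).

(** The class map A -> A/R (quotient set by the relation R): [a] = [a'] iff
    a and a' are related by the equivalence relation generated by R
    (which is R itself, R being an equivalence relation).
    alpha : A//R -> A/R, [a] |-> pi a, is injective iff
    pi a = pi a' implies [a] = [a']. *)
Definition same_class (A : PMonoid) (inR : A * A -> Prop) (a a' : A) : Prop :=
  clos_refl_sym_trans A (fun x y => inR (x, y)) a a'.

Definition alpha_injective (A : PMonoid) (inR : A * A -> Prop)
    (B : PMonoid) (pi : A -> B) : Prop :=
  forall a a', pi a = pi a' -> same_class A inR a a'.

(* Main.v *)
Require Import Defs.
From Stdlib Require Import Relations.

Definition baddb (a b : bool) : option bool :=
  match a, b with
  | false, _ => Some b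
  | _, false => Some a
  | true, true => None
  end.

Lemma baddb_assoc_def : forall a b c,
    (exists ab, baddb a b = Some ab /\ baddb ab c <> None) <->
    (exists bc, baddb b c = Some bc /\ baddb a bc <> None).
Proof.
  intros [|] [|] [|]; simpl; split; intros [x [H1 H2]]; inversion H1; subst;
    simpl in *; try (eexists; split; [reflexivity|simpl; discriminate]);
    try (exfalso; apply H2; reflexivity).
Qed.

Lemma baddb_assoc : forall a b c ab bc r,
    baddb a b = Some ab -> baddb b c = Some bc -> baddb ab c = Some r ->
    baddb a bc = Some r.
Proof.
  intros [|] [|] [|] ab bc r H1 H2 H3; simpl in *; inversion H1; inversion H2;
    subst; simpl in *; congruence.
Qed.

Definition BX : PMonoid.
Proof.
  refine (@Build_PMonoid bool false baddb _ _ _ baddb_assoc_def baddb_assoc).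
  - intros []; reflexivity.
  - intros []; reflexivity.
  - intros [] []; reflexivity.
Defined.

Definition gpt (A : PMonoid) (a : A) : BX -> A :=
  fun b : bool => if b then a else pzero.

Lemma gpt_hom (A : PMonoid) (a : A) : is_hom BX A (gpt A a).
Proof.
  split; [reflexivity|].
  intros [|] [|] c H; simpl in H; inversion H; subst; simpl;
    try apply padd_0l; try apply padd_0r.
Qed.

Lemma pt_equiv (A : PMonoid) inR R2 (HR : is_pm_equivalence A inR R2) :
  (forall a, inR (a, a)) /\ (forall a b, inR (a, b) -> inR (b, a)) /\
  (forall a b c, inR (a, b) -> inR (b, c) -> inR (a, c)).
Proof.
  destruct HR as [Hsub HX].
  destruct Hsub as [H0 [_ [Hz _]]].
  destruct (HX BX) as [Hr [Hs Ht]].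
  assert (Hmk : forall a b, inR (a, b) -> hom_rel A inR R2 BX (gpt A a) (gpt A b)).
  { intros a b Hab. split; [apply gpt_hom|split; [apply gpt_hom|split]].
    - intros []; simpl; auto.
    - intros [|] [|] x3 H; simpl in H; try discriminate; simpl.
      all: first [ apply (Hz (pzero, pzero) H0) | apply (Hz _ Hab) ]. }
  split; [|split].
  - intros a. destruct (Hr _ (gpt_hom A a)) as [_ [_ [H _]]]. exact (H true).
  - intros a b Hab. destruct (Hs _ _ (Hmk _ _ Hab)) as [_ [_ [H _]]]. exact (H true).
  - intros a b c Hab Hbc.
    destruct (Ht _ _ _ (Hmk _ _ Hab) (Hmk _ _ Hbc)) as [_ [_ [H _]]]. exact (H true).
Qed.

Theorem mainTheorem5 (A : PMonoid)
    (inR : A * A -> Prop) (R2 : A * A -> A * A -> Prop)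
    (HR : is_pm_equivalence A inR R2)
    (B : PMonoid) (pi : A -> B) (Hpi : is_coequalizer A inR B pi) :
  is_effective A inR R2 <->
  (is_additive A inR R2 /\ alpha_injective A inR B pi).
Proof.
  destruct (pt_equiv A inR R2 HR) as [Hrf [Hsy Htr]].
  assert (Hsub := proj1 HR).
  destruct Hsub as [_ [HR2 _]].
  destruct Hpi as [Hhom [Hpr Hun]].
  split.
  - intros [C [f [Hf [Hker H2]]]]. split.
    + intros p q. split.
      * intros Hpq. destruct (HR2 _ _ Hpq) as [Hp [Hq [s [Hs _]]]].
        repeat split; auto. rewrite Hs. discriminate.
      * intros [Hp [Hq Hn]]. apply H2; auto.
    + intros a a' Heq.
      destruct (Hun C f Hf (fun a a' H => proj1 (Hker a a') H)) as [[u [_ Hu]] _].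
      apply rst_step. apply Hker. rewrite <- !Hu, Heq. reflexivity.
  - intros [Had Hinj]. exists B, pi. split; [exact Hhom|split].
    + intros a a'. split; [apply Hpr|].
      intros Heq. specialize (Hinj a a' Heq).
      clear Heq. induction Hinj; [auto|apply Hrf|apply Hsy; auto|eapply Htr; eauto].
    + intros p q Hp Hq. specialize (Had p q). tauto.
Qed.
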